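(* For every type $A$: (CR1) $[\![A]\!]\subseteq \mathrm{SN}$; (CR2) if $t\in[\![A]\!]$ and $t\to_{\mathsf{dist}} s$, then $s\in[\![A]\!]$; (CR3) if $t$ is neutral and $\mathrm{Red}(t)\subseteq[\![A]\!]$, then $t\in[\![A]\!]$.
   Context: Terms: $t,s,u ::= x \mid \lambda x.t \mid ts \mid \langle t,s\rangle \mid \pi_1 t \mid \pi_2 t$ (up to $\alpha$-renaming). Top-level rules: $(\lambda x.t)s \mapsto t\{x:=s\}$; $\pi_i\langle t_1,t_2\rangle \mapsto t_i$ ($i=1,2$); $\langle t,s\rangle u \mapsto \langle tu, su\rangle$; $\pi_i(\lambda x.t)\mapsto \lambda x.\pi_i t$ ($i=1,2$); $\to_{\mathsf{dist}}$ is the closure of these rules under all term constructors. $\mathrm{SN}$ is the set of strongly normalizing terms for $\to_{\mathsf{dist}}$; $\mathrm{Red}(t)=\{s\mid t\to_{\mathsf{dist}} s\}$. A term is neutral if it is a variable, an application $ts$, or a projection $\pi_i t$. Types: $A ::= \tau \mid A\Rightarrow A \mid A\wedge A$. Interpretation: $[\![\tau]\!]=\mathrm{SN}$; $[\![A\Rightarrow B]\!]=\{t\mid \forall s\in[\![A]\!],\ ts\in[\![B]\!]\}$; $[\![A\wedge B]\!]=\{t\mid \pi_1t\in[\![A]\!]\text{ and }\pi_2 t\in[\![B]\!]\}$. *)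

(* Defs.v *)
(* Lambda terms with pairs, de Bruijn indices (terms up to alpha). *)
From Stdlib Require Import Arith.

Inductive index : Type := One | Two.

Inductive term : Type :=
| Var  : nat -> term
| Lam  : term -> term
| App  : term -> term -> term
| Pair : term -> term -> term
| Proj : index -> term -> term.

Fixpoint lift (k c : nat) (t : term) : term :=
  match t with
  | Var n => if Nat.ltb n c then Var n else Var (n + k)
  | Lam t => Lam (lift k (S c) t)
  | App t s => App (lift k c t) (lift k c s)
  | Pair t s => Pair (lift k c t) (lift k c s)
  | Proj i t => Proj i (lift k c t)
  end.

Fixpoint subst (c : nat) (u : term) (t : term) : term :=
  match t with
  | Var n =>
      match Nat.compare n c with
      | Lt => Var n
      | Eq => lift c 0 u
      | Gt => Var (pred n)
      end
  | Lam t => Lam (subst (S c) u t)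
  | App t s => App (subst c u t) (subst c u s)
  | Pair t s => Pair (subst c u t) (subst c u s)
  | Proj i t => Proj i (subst c u t)
  end.

Definition subst0 (t s : term) : term := subst 0 s t.

Definition proj_pair (i : index) (t1 t2 : term) : term :=
  match i with One => t1 | Two => t2 end.

Inductive top_step : term -> term -> Prop :=
| ts_beta : forall t s, top_step (App (Lam t) s) (subst0 t s)
| ts_proj : forall i t1 t2, top_step (Proj i (Pair t1 t2)) (proj_pair i t1 t2)
| ts_pairapp : forall t s u, top_step (App (Pair t s) u) (Pair (App t u) (App s u))
| ts_projlam : forall i t, top_step (Proj i (Lam t)) (Lam (Proj i t)).

Inductive step : term -> term -> Prop :=
| st_top : forall t s, top_step t s -> step t s
| st_lam : forall t t', step t t' -> step (Lam t) (Lam t')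
| st_appl : forall t t' s, step t t' -> step (App t s) (App t' s)
| st_appr : forall t s s', step s s' -> step (App t s) (App t s')
| st_pairl : forall t t' s, step t t' -> step (Pair t s) (Pair t' s)
| st_pairr : forall t s s', step s s' -> step (Pair t s) (Pair t s')
| st_proj : forall i t t', step t t' -> step (Proj i t) (Proj i t').

Inductive SN : term -> Prop :=
| SN_intro : forall t, (forall s, step t s -> SN s) -> SN t.

Definition Red (t : term) : term -> Prop := fun s => step t s.

Definition neutral (t : term) : Prop :=
  match t with
  | Var _ | App _ _ | Proj _ _ => True
  | _ => False
  end.

Inductive type : Type :=
| Base : type
| Arrow : type -> type -> type
| And : type -> type -> type.

Fixpoint interp (A : type) : term -> Prop :=
  match A with
  | Base => SN
  | Arrow A B => fun t => forall s, interp A s -> interp B (App t s)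
  | And A B => fun t => interp A (Proj One t) /\ interp B (Proj Two t)
  end.

(* Main.v *)
Require Import Defs.

Lemma SN_app_l : forall u, SN u -> forall t s, u = App t s -> SN t.
Proof.
  induction 1 as [u _ IH]; intros t s ->.
  constructor; intros t' H. eapply IH; [apply st_appl; exact H | reflexivity].
Qed.

Lemma SN_proj : forall u, SN u -> forall i t, u = Proj i t -> SN t.
Proof.
  induction 1 as [u _ IH]; intros i t ->.
  constructor; intros t' H. eapply IH; [apply st_proj; exact H | reflexivity].
Qed.

Lemma SN_step : forall t s, SN t -> step t s -> SN s.
Proof. intros t s H; destruct H; auto. Qed.

Theorem lemma5 : forall A : type,
  (forall t, interp A t -> SN t) /\
  (forall t s, interp A t -> step t s -> interp A s) /\
  (forall t, neutral t -> (forall s, Red t s -> interp A s) -> interp A t).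
Proof.
  induction A as [|A [IA1 [IA2 IA3]] B [IB1 [IB2 IB3]]|A [IA1 [IA2 IA3]] B [IB1 [IB2 IB3]]]; simpl.
  - split; [auto|split].
    + exact SN_step.
    + intros t _ H; constructor; exact H.
  - split; [|split].
    + intros t Ht.
      assert (Hv : interp A (Var 0)).
      { apply IA3; [exact I|]. intros s Hs; inversion Hs; subst. inversion H. }
      eapply SN_app_l; [apply IB1, Ht, Hv | reflexivity].
    + intros t s Ht Hst u Hu. apply (IB2 (App t u)); [auto|]. apply st_appl; exact Hst.
    + intros t Hn Hred u Hu.
      assert (Hsn := IA1 u Hu).
      induction Hsn as [u _ IH].
      apply IB3; [exact I|]. intros r Hr; unfold Red in Hr.
      inversion Hr; subst.
      * inversion H; subst; simpl in Hn; contradiction.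
      * apply Hred; assumption.
      * apply IH; [assumption|]. eapply IA2; eauto.
  - split; [|split].
    + intros t [H1 _]. eapply SN_proj; [apply IA1, H1 | reflexivity].
    + intros t s [H1 H2] Hst. split.
      * eapply IA2; [exact H1|]. apply st_proj; exact Hst.
      * eapply IB2; [exact H2|]. apply st_proj; exact Hst.
    + intros t Hn Hred. split.
      * apply IA3; [exact I|]. intros r Hr; unfold Red in Hr. inversion Hr; subst.
        -- inversion H; subst; simpl in Hn; contradiction.
        -- apply (Hred t' H2).
      * apply IB3; [exact I|]. intros r Hr; unfold Red in Hr. inversion Hr; subst.
        -- inversion H; subst; simpl in Hn; contradiction.
        -- apply (Hred t' H2).
Qed.
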